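(* If $M$ is a centrally endo-AIP right $R$-module, then $S=\mathrm{End}_R(M)$ is a semiprime ring.
   Context: For $N\le M$, $l_S(N)=\{\phi\in S:\phi(N)=0\}$. An ideal $I$ of $S$ is centrally s-unital if for every $a\in I$ there is $z\in I$ central in $S$ with $az=a$. $M$ is centrally endo-AIP if $l_S(N)$ is a centrally s-unital ideal of $S$ for every fully invariant submodule $N$ of $M$. *)

(* Defs.v *)
From HB Require Import structures.
From mathcomp Require Import all_boot all_order all_algebra.
Set Implicit Arguments. Unset Strict Implicit. Unset Printing Implicit Defensive.
Import GRing.Theory.
Local Open Scope ring_scope.

(* A right R-module M is modelled as a left module over the converse ring R^c:
   the right action  m * r  is written  (r : R^c) *: m.
   S = End_R(M) is modelled as the set of R-linear maps M -> M, with
   ring operations pointwise addition and composition (f * g = f \o g). *)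

Section EndoRing.
Variables (R : nzRingType) (M : lmodType R^c).

Definition endo (f : M -> M) : Prop := linear f.

(* a two-sided ideal of S, given as a predicate on maps M -> M *)
Definition is_ideal (I : (M -> M) -> Prop) : Prop :=
  [/\ forall f, I f -> endo f,
      I (fun _ => 0),
      forall f g, I f -> I g -> I (fun x => f x - g x),
      forall f g, I f -> endo g -> I (g \o f)
    & forall f g, I f -> endo g -> I (f \o g)].

Definition is_submodule (N : M -> Prop) : Prop :=
  N 0 /\ forall (r : R^c) u v, N u -> N v -> N (r *: u + v).

Definition fully_invariant (N : M -> Prop) : Prop :=
  is_submodule N /\ forall phi, endo phi -> forall x, N x -> N (phi x).

Definition lS (N : M -> Prop) : (M -> M) -> Prop :=
  fun phi => endo phi /\ forall x, N x -> phi x = 0.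

Definition central_in_S (z : M -> M) : Prop :=
  endo z /\ forall g, endo g -> g \o z = z \o g.

Definition centrally_s_unital (I : (M -> M) -> Prop) : Prop :=
  is_ideal I /\
  forall a, I a -> exists z, [/\ I z, central_in_S z & a \o z = a].

Definition centrally_endo_AIP : Prop :=
  forall N, fully_invariant N -> centrally_s_unital (lS N).

Definition End_semiprime : Prop :=
  forall I, is_ideal I ->
    (forall a b, I a -> I b -> a \o b = (fun _ => 0)) ->
    forall a, I a -> a = (fun _ => 0).

End EndoRing.

(* Main.v *)
Require Import Defs.
From mathcomp Require Import all_boot all_order all_algebra.
From Stdlib Require Import FunctionalExtensionality.
Set Implicit Arguments.
Import GRing.Theory.
Local Open Scope ring_scope.

Lemma endo_lin (R : nzRingType) (M : lmodType R^c) (f : M -> M) :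
  endo f -> forall (r : R^c) u v, f (r *: u + v) = r *: f u + f v.
Proof. by move=> H r u v; apply: H. Qed.

Lemma endo0 (R : nzRingType) (M : lmodType R^c) (f : M -> M) :
  endo f -> f 0 = 0.
Proof.
move=> H; have := endo_lin H (-1) 0 0.
by rewrite scaleN1r oppr0 addr0 scaleN1r addNr.
Qed.

Theorem corollary3p2 (R : nzRingType) (M : lmodType R^c) :
  centrally_endo_AIP M -> End_semiprime M.
Proof.
move=> H I [Iend I0 Isub Il Ir] I2 a Ia.
pose N := fun x : M => forall b, I b -> b x = 0.
have FN : fully_invariant N.
  split; [split|].
  - by move=> b Ib; apply: endo0; apply: Iend.
  - move=> r u v Nu Nv b Ib; rewrite (endo_lin (Iend _ Ib)) Nu // Nv //.
    by rewrite scaler0 addr0.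
  - move=> phi ephi x Nx b Ib; exact: (Nx _ (Ir _ _ Ib ephi)).
have [_ Hs] := H N FN.
have [z [[_ Hz] [ez Cz] az]] := Hs a (conj (Iend _ Ia) (fun x Nx => Nx a Ia)).
rewrite -az (Cz _ (Iend _ Ia)).
apply: functional_extensionality => x /=; apply: Hz => b Ib.
by have := I2 _ _ Ib Ia => /(congr1 (fun f => f x)).
Qed.
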